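(* Let $n < 8$. Let $\phi$ and $\psi$ be constant-free, negation-free linear formulae on the same set of $n$ variables, and suppose $\phi \to \psi$ is a non-trivial linear inference. Then $\phi$ is $\{\mathsf{s},\mathsf{m}\}$-derivable to $\psi$ without units, i.e. $\phi \overset{*}{\rightsquigarrow}_{\{\mathsf{s},\mathsf{m}\}} \psi$.
   Context: Fix a countably infinite set of variables. Linear formulae on a finite set $\mathcal{V}$ of variables are defined inductively: - $\top$ and $\bot$ are linear formulae on $\emptyset$. - $x$ and $\neg x$ are linear formulae on $\{x\}$. - If $\phi$ is on $\mathcal{V}_1$, $\psi$ is on $\mathcal{V}_2$ and $\mathcal{V}_1\cap\mathcal{V}_2=\emptyset$, then $\phi\lor\psi$ and $\phi\land\psi$ are on $\mathcal{V}_1\cup\mathcal{V}_2$. A formula is constant-free if it contains no $\top,\bot$, and negation-free if it contains no $\neg x$. Formulae are evaluated under Boolean assignments as usual. A linear inference $\phi\to\psi$ is a pair of linear formulae such that every assignment satisfying $\phi$ satisfies $\psi$. An inference $\phi\to\psi$ is trivial at a variable $x$ if $\phi[\top/x]\to\psi[\bot/x]$ is again a valid inference. It is trivial if it is trivial at one of its variables, and non-trivial otherwise. $\sim_{\mathsf{ac}}$ is the smallest equivalence relation on formulae, closed under $\land$- and $\lor$-contexts, containing commutativity and associativity of $\land$ and $\lor$. For a set $S$ of linear inferences, $\to_S$ is the smallest relation containing $S$ and closed under substitution (of linear formulae for variables, keeping linearity) and contexts. We write $\phi\rightsquigarrow_S\psi$ if $\phi\sim_{\mathsf{ac}}\phi'\to_S\psi'\sim_{\mathsf{ac}}\psi$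 for some $\phi',\psi'$, and $\overset{*}{\rightsquigarrow}_S$ for the reflexive-transitive closure of $\rightsquigarrow_S\cup\sim_{\mathsf{ac}}$ ($S$-derivability without units). Switch $\mathsf{s}$ is $x\land(y\lor z)\to(x\land y)\lor z$; medial $\mathsf{m}$ is $(w\land x)\lor(y\land z)\to(w\lor y)\land(x\lor z)$. *)

(* Defs.v *)
From mathcomp Require Import all_boot.
From Stdlib Require Import Relations.Relation_Operators.
Set Implicit Arguments. Unset Strict Implicit. Unset Printing Implicit Defensive.

Inductive formula : Type :=
| FTop : formula
| FBot : formula
| FVar : nat -> formula
| FNeg : nat -> formula
| FAnd : formula -> formula -> formula
| FOr  : formula -> formula -> formula.

Fixpoint vars (f : formula) : seq nat :=
  match f with
  | FTop | FBot => [::]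
  | FVar x | FNeg x => [:: x]
  | FAnd a b | FOr a b => vars a ++ vars b
  end.

(* Linear formula: every variable occurs at most once (then it is a linear
   formula on the set of its variables, built as in the inductive definition). *)
Definition linear (f : formula) : bool := uniq (vars f).

Fixpoint constant_free (f : formula) : bool :=
  match f with
  | FTop | FBot => false
  | FVar _ | FNeg _ => true
  | FAnd a b | FOr a b => constant_free a && constant_free b
  end.

Fixpoint negation_free (f : formula) : bool :=
  match f with
  | FNeg _ => false
  | FTop | FBot | FVar _ => true
  | FAnd a b | FOr a b => negation_free a && negation_free b
  end.

Fixpoint eval (v : nat -> bool) (f : formula) : bool :=
  match f with
  | FTop => true
  | FBot => false
  | FVar x => v x
  | FNeg x => ~~ v x
  | FAnd a b => eval v a && eval v b
  | FOr a b => eval v a || eval v b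
  end.

Definition valid (phi psi : formula) : Prop :=
  forall v : nat -> bool, eval v phi -> eval v psi.

(* Negation (De Morgan dual) of a formula, used to substitute into ~ x. *)
Fixpoint fneg (f : formula) : formula :=
  match f with
  | FTop => FBot
  | FBot => FTop
  | FVar x => FNeg x
  | FNeg x => FVar x
  | FAnd a b => FOr (fneg a) (fneg b)
  | FOr a b => FAnd (fneg a) (fneg b)
  end.

Fixpoint subst (s : nat -> formula) (f : formula) : formula :=
  match f with
  | FTop => FTop
  | FBot => FBot
  | FVar x => s x
  | FNeg x => fneg (s x)
  | FAnd a b => FAnd (subst s a) (subst s b)
  | FOr a b => FOr (subst s a) (subst s b)
  end.

Definition subst1 (x : nat) (c : formula) : formula -> formula :=
  subst (fun y => if y == x then c else FVar y).

Definition trivial_at (phi psi : formula) (x : nat) : Prop :=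
  valid (subst1 x FTop phi) (subst1 x FBot psi).

Definition inf_vars (phi psi : formula) : seq nat := vars phi ++ vars psi.

Definition nontrivial (phi psi : formula) : Prop :=
  forall x, x \in inf_vars phi psi -> ~ trivial_at phi psi x.

Inductive ac : formula -> formula -> Prop :=
| ac_refl a : ac a a
| ac_sym a b : ac a b -> ac b a
| ac_trans a b c : ac a b -> ac b c -> ac a c
| ac_andC a b : ac (FAnd a b) (FAnd b a)
| ac_orC a b : ac (FOr a b) (FOr b a)
| ac_andA a b c : ac (FAnd a (FAnd b c)) (FAnd (FAnd a b) c)
| ac_orA a b c : ac (FOr a (FOr b c)) (FOr (FOr a b) c)
| ac_andL a a' b : ac a a' -> ac (FAnd a b) (FAnd a' b)
| ac_andR a b b' : ac b b' -> ac (FAnd a b) (FAnd a b')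
| ac_orL a a' b : ac a a' -> ac (FOr a b) (FOr a' b)
| ac_orR a b b' : ac b b' -> ac (FOr a b) (FOr a b').

Definition infset := formula -> formula -> Prop.

Inductive rstep (S : infset) : formula -> formula -> Prop :=
| rs_base l r (s : nat -> formula) :
    S l r -> linear (subst s l) -> linear (subst s r) ->
    rstep S (subst s l) (subst s r)
| rs_andL a a' b : rstep S a a' -> rstep S (FAnd a b) (FAnd a' b)
| rs_andR a b b' : rstep S b b' -> rstep S (FAnd a b) (FAnd a b')
| rs_orL a a' b : rstep S a a' -> rstep S (FOr a b) (FOr a' b)
| rs_orR a b b' : rstep S b b' -> rstep S (FOr a b) (FOr a b').

Definition rsq (S : infset) (phi psi : formula) : Prop :=
  exists phi' psi', ac phi phi' /\ rstep S phi' psi' /\ ac psi' psi.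

Definition derivable (S : infset) : formula -> formula -> Prop :=
  clos_refl_trans formula (fun a b => rsq S a b \/ ac a b).

Definition vx := FVar 0. Definition vy := FVar 1.
Definition vz := FVar 2. Definition vw := FVar 3.

Definition switch_l := FAnd vx (FOr vy vz).
Definition switch_r := FOr (FAnd vx vy) vz.
Definition medial_l := FOr (FAnd vw vx) (FAnd vy vz).
Definition medial_r := FAnd (FOr vw vy) (FOr vx vz).

Definition SM : infset := fun l r =>
  (l = switch_l /\ r = switch_r) \/ (l = medial_l /\ r = medial_r).

(* Main.v *)
Require Import Defs.
From mathcomp Require Import all_boot.
From Stdlib Require Import Relations.Relation_Operators.
From HB Require Import structures.
Set Implicit Arguments. Unset Strict Implicit. Unset Printing Implicit Defensive.


Fixpoint feqb (a b : formula) : bool :=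
  match a, b with
  | FTop, FTop => true | FBot, FBot => true
  | FVar x, FVar y => x == y | FNeg x, FNeg y => x == y
  | FAnd a1 a2, FAnd b1 b2 => feqb a1 b1 && feqb a2 b2
  | FOr a1 a2, FOr b1 b2 => feqb a1 b1 && feqb a2 b2
  | _, _ => false end.

Lemma feqbP : Equality.axiom feqb.
Proof.
elim=> [||x|x|a1 IH1 a2 IH2|a1 IH1 a2 IH2] [||y|y|b1 b2|b1 b2] /=;
  try (by constructor); try (by apply: (iffP eqP) => [->|[]]).
- by apply: (iffP andP) => [[/IH1 -> /IH2 ->]|[<- <-]]; split; [apply/IH1|apply/IH2].
- by apply: (iffP andP) => [[/IH1 -> /IH2 ->]|[<- <-]]; split; [apply/IH1|apply/IH2].
Qed.
HB.instance Definition _ := hasDecEq.Build formula feqbP.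

Lemma feqbE a b : feqb a b = (a == b). Proof. by []. Qed.


Definition mkop (b : bool) := if b then FAnd else FOr.

Fixpoint ren (r : nat -> nat) (f : formula) : formula :=
  match f with
  | FVar x => FVar (r x) | FNeg x => FNeg (r x)
  | FAnd a b => FAnd (ren r a) (ren r b)
  | FOr a b => FOr (ren r a) (ren r b)
  | c => c end.

Definition topis (b : bool) (f : formula) : bool :=
  match f with FAnd _ _ => b | FOr _ _ => ~~ b | _ => false end.

Lemma eval_fneg v g : eval v (fneg g) = ~~ eval v g.
Proof. by elim: g => //= [x|a -> b ->|a -> b ->]; rewrite ?negb_or ?negb_and // negbK. Qed.

Lemma eval_ren v r f : eval v (ren r f) = eval (v \o r) f.
Proof. by elim: f => //= a -> b ->. Qed.

Lemma eval_subst v s f : eval v (subst s f) = eval (fun x => eval v (s x)) f.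
Proof. by elim: f => //= [x|a -> b ->|a -> b ->]; rewrite ?eval_fneg. Qed.

Lemma eval_ext v w f : {in vars f, v =1 w} -> eval v f = eval w f.
Proof.
elim: f => //= [x|x|a IHa b IHb|a IHa b IHb] H.
- by rewrite H // inE.
- by rewrite H // inE.
- by rewrite IHa ?IHb // => y Hy; apply: H; rewrite mem_cat Hy ?orbT.
- by rewrite IHa ?IHb // => y Hy; apply: H; rewrite mem_cat Hy ?orbT.
Qed.

Lemma vars_ren r f : vars (ren r f) = map r (vars f).
Proof. by elim: f => //= a -> b ->; rewrite map_cat. Qed.

Lemma vars_fneg g : vars (fneg g) = vars g.
Proof. by elim: g => //= a -> b ->. Qed.

Lemma vars_subst s f : vars (subst s f) = flatten [seq vars (s x) | x <- vars f].
Proof.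
elim: f => //= [x|x|a -> b ->|a -> b ->]; rewrite ?vars_fneg ?cats0 //; by rewrite map_cat flatten_cat.
Qed.

Lemma ren_fneg r g : ren r (fneg g) = fneg (ren r g).
Proof. by elim: g => //= a -> b ->. Qed.

Lemma ren_subst r s f : ren r (subst s f) = subst (fun x => ren r (s x)) f.
Proof. by elim: f => //= [x|a -> b ->|a -> b ->]; rewrite ?ren_fneg. Qed.

Lemma ren_comp r1 r2 f : ren r1 (ren r2 f) = ren (r1 \o r2) f.
Proof. by elim: f => //= a -> b ->. Qed.

Lemma ren_ext r1 r2 f : {in vars f, r1 =1 r2} -> ren r1 f = ren r2 f.
Proof.
elim: f => //= [x|x|a IHa b IHb|a IHa b IHb] H.
- by rewrite H // inE.
- by rewrite H // inE.
- by rewrite IHa ?IHb // => y Hy; apply: H; rewrite mem_cat Hy ?orbT.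
- by rewrite IHa ?IHb // => y Hy; apply: H; rewrite mem_cat Hy ?orbT.
Qed.

Lemma ren_id f : ren id f = f.
Proof. by elim: f => //= a -> b ->. Qed.

Lemma ac_ren r a b : ac a b -> ac (ren r a) (ren r b).
Proof.
elim=> /= *; [exact: ac_refl|by apply: ac_sym|by eapply ac_trans; eassumption|
  exact: ac_andC|exact: ac_orC|exact: ac_andA|exact: ac_orA|
  by apply: ac_andL|by apply: ac_andR|by apply: ac_orL|by apply: ac_orR].
Qed.

Lemma ac_subst s a b : ac a b -> ac (subst s a) (subst s b).
Proof.
elim=> /= *; [exact: ac_refl|by apply: ac_sym|by eapply ac_trans; eassumption|
  exact: ac_andC|exact: ac_orC|exact: ac_andA|exact: ac_orA|
  by apply: ac_andL|by apply: ac_andR|by apply: ac_orL|by apply: ac_orR].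
Qed.

Lemma ac_eval v a b : ac a b -> eval v a = eval v b.
Proof.
elim=> //= *; try congruence.
- by rewrite andbC. - by rewrite orbC. - by rewrite andbA. - by rewrite orbA.
Qed.

Lemma ac_vars a b : ac a b -> perm_eq (vars a) (vars b).
Proof.
elim=> //= *.
- by rewrite perm_sym.
- by apply: perm_trans; eauto.
- by rewrite perm_catC.
- by rewrite perm_catC.
- by rewrite catA.
- by rewrite catA.
- by rewrite perm_cat2r.
- by rewrite perm_cat2l.
- by rewrite perm_cat2r.
- by rewrite perm_cat2l.
Qed.

Lemma ac_cf a b : ac a b -> constant_free a = constant_free b.
Proof. elim=> //= *; try congruence; by rewrite ?andbA // andbC. Qed.

Lemma ac_nf a b : ac a b -> negation_free a = negation_free b.
Proof. elim=> //= *; try congruence; by rewrite ?andbA // andbC. Qed.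

Lemma ac_top c a b : ac a b -> topis c a = topis c b.
Proof. by elim=> //= *; congruence. Qed.

Lemma valid_ac a a' b b' : ac a a' -> ac b b' -> valid a b -> valid a' b'.
Proof. by move=> H1 H2 H v; rewrite -(ac_eval v H1) -(ac_eval v H2); apply: H. Qed.

Lemma valid_ren r a b : valid a b -> valid (ren r a) (ren r b).
Proof. by move=> H v; rewrite !eval_ren; apply: H. Qed.

Lemma valid_trans a b c : valid a b -> valid b c -> valid a c.
Proof. by move=> H1 H2 v /H1 /H2. Qed.


Fixpoint bigf (b : bool) (l : seq formula) : formula :=
  match l with
  | [::] => FTop
  | x :: l' => match l' with [::] => x | _ => mkop b x (bigf b l') end
  end.

Fixpoint spine (b : bool) (f : formula) : seq formula :=
  match f with
  | FAnd x y => if b then x :: spine b y else [:: f]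
  | FOr x y => if b then [:: f] else x :: spine b y
  | _ => [:: f] end.

Fixpoint flat (b : bool) (f : formula) : seq formula :=
  match f with
  | FAnd x y => if b then flat b x ++ flat b y else [:: f]
  | FOr x y => if b then [:: f] else flat b x ++ flat b y
  | _ => [:: f] end.

Lemma bigf_cons b x l : l != [::] -> bigf b (x :: l) = mkop b x (bigf b l).
Proof. by case: l. Qed.

Lemma ac_mkopC b x y : ac (mkop b x y) (mkop b y x).
Proof. case: b; [exact: ac_andC|exact: ac_orC]. Qed.
Lemma ac_mkopA b x y z : ac (mkop b x (mkop b y z)) (mkop b (mkop b x y) z).
Proof. case: b; [exact: ac_andA|exact: ac_orA]. Qed.
Lemma ac_mkopL b x x' y : ac x x' -> ac (mkop b x y) (mkop b x' y).
Proof. case: b; [exact: ac_andL|exact: ac_orL]. Qed.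
Lemma ac_mkopR b x y y' : ac y y' -> ac (mkop b x y) (mkop b x y').
Proof. case: b; [exact: ac_andR|exact: ac_orR]. Qed.
Lemma ac_mkopLR b x x' y y' : ac x x' -> ac y y' -> ac (mkop b x y) (mkop b x' y').
Proof. move=> H1 H2; apply: ac_trans (ac_mkopL _ _ H1) (ac_mkopR _ _ H2). Qed.
Lemma ac_mkop_swap b x y z : ac (mkop b x (mkop b y z)) (mkop b y (mkop b x z)).
Proof.
apply: ac_trans (ac_mkopA _ _ _ _) _.
apply: ac_trans (ac_mkopL _ _ (ac_mkopC _ _ _)) _.
exact: ac_sym (ac_mkopA _ _ _ _).
Qed.

Lemma bigf_cat b l1 l2 : l1 != [::] -> l2 != [::] ->
  ac (bigf b (l1 ++ l2)) (mkop b (bigf b l1) (bigf b l2)).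
Proof.
elim: l1 => // x [|y l1] IH _ Hl2.
  by rewrite cat1s bigf_cons //; exact: ac_refl.
rewrite cat_cons (bigf_cons _ _ (isT : (y :: l1) ++ l2 != [::])).
rewrite (bigf_cons _ _ (isT : (y :: l1) != [::])).
apply: ac_trans (ac_mkopR _ _ (IH isT Hl2)) _.
exact: ac_mkopA.
Qed.

Lemma bigf_move b x q1 q2 : ac (bigf b (x :: q1 ++ q2)) (bigf b (q1 ++ x :: q2)).
Proof.
elim: q1 => [|y q1 IH]; first exact: ac_refl.
rewrite !cat_cons.
have Hne2 : q1 ++ x :: q2 != [::] by case: q1 {IH}.
rewrite bigf_cons // (bigf_cons _ _ Hne2).
case E: (q1 ++ q2) IH => [|z q] IH.
- move: E Hne2; case: q1 {IH} => // /= ->  _; exact: ac_mkopC.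
- rewrite -E in IH *.
  have Hne : q1 ++ q2 != [::] by rewrite E.
  rewrite (bigf_cons _ _ Hne).
  apply: ac_trans (ac_mkop_swap _ _ _ _) _.
  apply: ac_mkopR; rewrite -(bigf_cons _ _ Hne); exact: IH.
Qed.

Lemma bigf_perm b l l' : perm_eq l l' -> ac (bigf b l) (bigf b l').
Proof.
elim: l l' => [|x l0 IH] l'.
  by rewrite perm_sym => /perm_nilP ->; exact: ac_refl.
move=> Hp.
have Hx : x \in l' by rewrite -(perm_mem Hp) inE eqxx.
move: Hp; case/splitPr: Hx => p1 p2 Hp.
have H1 : perm_eq (p1 ++ x :: p2) (x :: p1 ++ p2) by rewrite -cat1s perm_catCA.
move: (perm_trans Hp H1); rewrite perm_cons => {H1}Hp.
apply: ac_trans (bigf_move _ _ _ _).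
case: l0 IH Hp => [|y l0] IH Hp.
- move: Hp; rewrite perm_sym => /perm_nilP ->; exact: ac_refl.
- have Hne : p1 ++ p2 != [::] by case: (p1 ++ p2) Hp => // /perm_nilP.
  rewrite (bigf_cons _ _ Hne) bigf_cons //.
  apply: ac_mkopR; exact: IH.
Qed.

Lemma bigf_map_ac b (f g : formula -> formula) l :
  (forall x, x \in l -> ac (f x) (g x)) -> ac (bigf b (map f l)) (bigf b (map g l)).
Proof.
elim: l => [|x [|y l] IH] H /=; first exact: ac_refl.
- by apply: H; rewrite inE eqxx.
- apply: ac_mkopLR; first by apply: H; rewrite inE eqxx.
  rewrite -/(bigf b (map f (y :: l))) -/(bigf b (map g (y :: l))).
  by apply: IH => z Hz; apply: H; rewrite inE Hz orbT.
Qed.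

Lemma bigf_ctx_step (R : formula -> formula -> Prop) b L1 L2 c c' :
  (forall x y z, R x y -> R (mkop b x z) (mkop b y z)) ->
  (forall x y z, R x y -> R (mkop b z x) (mkop b z y)) ->
  R c c' -> R (bigf b (L1 ++ c :: L2)) (bigf b (L1 ++ c' :: L2)).
Proof.
move=> HL HR H; elim: L1 => [|x L1 IH] /=.
- by case: L2 => //= *; apply: HL.
- by case E: (L1 ++ c :: L2) IH => [|y l]; [case: L1 E|case: L1 E => [|? ?] [<- <-] /=; apply: HR].
Qed.

Lemma spine_neq0 b f : spine b f != [::].
Proof. by case: f => //= *; case: b. Qed.

Lemma spine_bigf b f : bigf b (spine b f) = f.
Proof.
elim: f => // x _ y IH; case: b IH => IH;
  rewrite [spine _ _]/= //; by rewrite bigf_cons ?spine_neq0 // IH.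
Qed.

Lemma flat_neq0 b f : flat b f != [::].
Proof. elim: f => //= x Hx y Hy; case: b Hx Hy => // Hx Hy; by case: (flat _ x) Hx. Qed.

Lemma flat_ac b f : ac f (bigf b (flat b f)).
Proof.
elim: f => /=; try (intros; exact: ac_refl).
- move=> x Hx y Hy; case: b Hx Hy => Hx Hy; last exact: ac_refl.
  apply: ac_sym; apply: ac_trans (bigf_cat _ (flat_neq0 _ _) (flat_neq0 _ _)) _.
  exact: ac_sym (ac_mkopLR true Hx Hy).
- move=> x Hx y Hy; case: b Hx Hy => Hx Hy; first exact: ac_refl.
  apply: ac_sym; apply: ac_trans (bigf_cat _ (flat_neq0 _ _) (flat_neq0 _ _)) _.
  exact: ac_sym (ac_mkopLR false Hx Hy).
Qed.

Lemma vars_mkop b x y : vars (mkop b x y) = vars x ++ vars y. Proof. by case: b. Qed.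
Lemma cf_mkop b x y : constant_free (mkop b x y) = constant_free x && constant_free y. Proof. by case: b. Qed.
Lemma nf_mkop b x y : negation_free (mkop b x y) = negation_free x && negation_free y. Proof. by case: b. Qed.

Lemma vars_bigf b l : l != [::] -> vars (bigf b l) = flatten (map vars l).
Proof.
elim: l => // x [|y l] IH _; first by rewrite /= cats0.
by rewrite bigf_cons // vars_mkop IH.
Qed.

Lemma cf_bigf b l : l != [::] -> constant_free (bigf b l) = all constant_free l.
Proof.
elim: l => // x [|y l] IH _; first by rewrite /= andbT.
by rewrite bigf_cons // cf_mkop IH.
Qed.

Lemma nf_bigf b l : l != [::] -> negation_free (bigf b l) = all negation_free l.
Proof.
elim: l => // x [|y l] IH _; first by rewrite /= andbT.
by rewrite bigf_cons // nf_mkop IH.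
Qed.

Lemma vars_flat b f : flatten (map vars (flat b f)) = vars f.
Proof.
elim: f => //= x Hx y Hy;
  case: b Hx Hy => Hx Hy /=; by rewrite ?cats0 // map_cat flatten_cat Hx Hy.
Qed.

Lemma cf_flat b f : all constant_free (flat b f) = constant_free f.
Proof.
elim: f => //= x Hx y Hy;
  case: b Hx Hy => Hx Hy /=; by rewrite ?andbT // all_cat Hx Hy.
Qed.

Lemma nf_flat b f : all negation_free (flat b f) = negation_free f.
Proof.
elim: f => //= x Hx y Hy;
  case: b Hx Hy => Hx Hy /=; by rewrite ?andbT // all_cat Hx Hy.
Qed.

Lemma topis_flat b f x : x \in flat b f -> topis b x = false.
Proof.
elim: f => [||y|y|y Hy z Hz|y Hy z Hz] /=; try by rewrite inE => /eqP ->.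
- case: b Hy Hz => Hy Hz; rewrite ?mem_cat ?inE.
  + by case/orP; [apply: Hy|apply: Hz].
  + by move/eqP ->.
- case: b Hy Hz => Hy Hz; rewrite ?mem_cat ?inE.
  + by move/eqP ->.
  + by case/orP; [apply: Hy|apply: Hz].
Qed.

Lemma size_flat b f : topis b f -> 1 < size (flat b f).
Proof.
have H : forall l1 l2 : seq formula, l1 != [::] -> l2 != [::] -> 1 < size (l1 ++ l2).
  by case=> // ? ? [] // ? ?; rewrite size_cat /= addnS.
case: f => //= x y; case: b => // _; exact: H (flat_neq0 _ _) (flat_neq0 _ _).
Qed.


Lemma SM_vars l r : SM l r -> perm_eq (vars l) (vars r).
Proof. by case=> [[-> ->]|[-> ->]]. Qed.

Lemma SM_valid l r : SM l r -> valid l r.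
Proof.
case=> [[-> ->]|[-> ->]] v /=.
- by case: (v 0); case: (v 1); case: (v 2).
- by case: (v 0); case: (v 1); case: (v 2); case: (v 3).
Qed.

Lemma vars_subst_perm s l r : perm_eq (vars l) (vars r) ->
  perm_eq (vars (subst s l)) (vars (subst s r)).
Proof. by move=> H; rewrite !vars_subst; apply/perm_flatten/perm_map. Qed.

Lemma rstep_vars a b : rstep SM a b -> perm_eq (vars a) (vars b).
Proof.
elim=> /= *.
- by apply: vars_subst_perm; apply: SM_vars.
- by rewrite perm_cat2r.
- by rewrite perm_cat2l.
- by rewrite perm_cat2r.
- by rewrite perm_cat2l.
Qed.

Lemma rstep_valid a b : rstep SM a b -> valid a b.
Proof.
elim=> /=.
- move=> l r s H _ _ v; rewrite !eval_subst; exact: SM_valid H _.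
- by move=> a0 a' b0 _ H v /= /andP [/H -> ->].
- by move=> a0 b0 b' _ H v /= /andP [-> /H ->].
- by move=> a0 a' b0 _ H v /= /orP [/H ->|->]; rewrite ?orbT.
- by move=> a0 b0 b' _ H v /= /orP [->|/H ->]; rewrite ?orbT.
Qed.

Lemma rsq_valid a b : rsq SM a b -> valid a b.
Proof.
case=> [a' [b' [H1 [H2 H3]]]] v Ha.
rewrite -(ac_eval v H3); apply: (rstep_valid H2); by rewrite -(ac_eval v H1).
Qed.

Lemma rsq_vars a b : rsq SM a b -> perm_eq (vars a) (vars b).
Proof.
case=> [a' [b' [H1 [H2 H3]]]].
apply: perm_trans (ac_vars H1) _; apply: perm_trans (rstep_vars H2) _; exact: ac_vars.
Qed.

Lemma inj_sub (r : nat -> nat) (s1 s2 : seq nat) :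
  {subset s2 <= s1} -> {in s1 &, injective r} -> {in s2 &, injective r}.
Proof. by move=> Hs H x y Hx Hy; apply: H; apply: Hs. Qed.

Lemma rstep_ren r a b : rstep SM a b -> {in vars a &, injective r} ->
  rstep SM (ren r a) (ren r b).
Proof.
elim=> /=.
- move=> l r0 s HS Hl Hr Hinj; rewrite !ren_subst; apply: rs_base => //.
  + by rewrite -ren_subst /linear vars_ren map_inj_in_uniq.
  + rewrite -ren_subst /linear vars_ren map_inj_in_uniq //.
    apply: inj_sub Hinj => x.
    by rewrite (perm_mem (vars_subst_perm s (SM_vars HS))).
- move=> a0 a' b0 _ IH H; apply: rs_andL; apply: IH; apply: inj_sub H => x Hx.
  by rewrite mem_cat Hx.
- move=> a0 b0 b' _ IH H; apply: rs_andR; apply: IH; apply: inj_sub H => x Hx.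
  by rewrite mem_cat Hx orbT.
- move=> a0 a' b0 _ IH H; apply: rs_orL; apply: IH; apply: inj_sub H => x Hx.
  by rewrite mem_cat Hx.
- move=> a0 b0 b' _ IH H; apply: rs_orR; apply: IH; apply: inj_sub H => x Hx.
  by rewrite mem_cat Hx orbT.
Qed.

Lemma rsq_ren r a b : rsq SM a b -> {in vars a &, injective r} ->
  rsq SM (ren r a) (ren r b).
Proof.
case=> [a' [b' [H1 [H2 H3]]]] Hinj.
exists (ren r a'), (ren r b'); split; first exact: ac_ren.
split; last exact: ac_ren.
apply: rstep_ren => //; apply: inj_sub Hinj => x.
by rewrite (perm_mem (ac_vars H1)).
Qed.

Lemma rsq_ctx b L1 L2 c c' : rsq SM c c' ->
  rsq SM (bigf b (L1 ++ c :: L2)) (bigf b (L1 ++ c' :: L2)).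
Proof.
case=> [c1 [c2 [H1 [H2 H3]]]].
exists (bigf b (L1 ++ c1 :: L2)), (bigf b (L1 ++ c2 :: L2)); split; [|split].
- apply: bigf_ctx_step H1 => *; [exact: ac_mkopL|exact: ac_mkopR].
- apply: bigf_ctx_step H2 => x y z H; case: b => /=;
    [exact: rs_andL|exact: rs_orL|exact: rs_andR|exact: rs_orR].
- apply: bigf_ctx_step H3 => *; [exact: ac_mkopL|exact: ac_mkopR].
Qed.


Fixpoint picks (l : seq formula) : seq (formula * seq formula) :=
  match l with
  | [::] => [::]
  | x :: l' => (x, l') :: [seq (p.1, x :: p.2) | p <- picks l']
  end.

Fixpoint fsplits (l : seq formula) : seq (seq formula * seq formula) :=
  match l with
  | [::] => [:: ([::], [::])]
  | x :: l' => [seq (x :: p.1, p.2) | p <- fsplits l'] ++ [seq (p.1, x :: p.2) | p <- fsplits l']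
  end.

Definition nonnil {T} (l : seq T) := if l is [::] then false else true.

Definition sw_local (f : formula) : seq formula :=
  let l := spine true f in
  flatten [seq
    (match p.1 with
     | FOr _ _ =>
        let E := spine false p.1 in
        flatten [seq
          (if nonnil q.1 then
             [seq bigf true (rcons q.2 (FOr (FAnd (bigf true q.1) (bigf false yz.1)) (bigf false yz.2)))
               | yz <- fsplits E & nonnil yz.1 && nonnil yz.2]
           else [::])
          | q <- fsplits p.2]
     | _ => [::] end)
    | p <- picks l].

Definition md_local (f : formula) : seq formula :=
  let l := spine false f in
  flatten [seq
    (match p.1 with
     | FAnd _ _ =>
       flatten [seq
         (match q.1 with
          | FAnd _ _ =>
            flatten [seq
              [seq bigf false (rcons q.2 (FAnd (FOr (bigf true wx.1) (bigf true yz.1)) (FOr (bigf true wx.2) (bigf true yz.2))))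
                 | yz <- fsplits (spine true q.1) & nonnil yz.1 && nonnil yz.2]
              | wx <- fsplits (spine true p.1) & nonnil wx.1 && nonnil wx.2]
          | _ => [::] end)
         | q <- picks p.2]
     | _ => [::] end)
    | p <- picks l].

Definition deep (rec : formula -> seq formula) (b : bool) (f : formula) : seq formula :=
  let l := spine b f in
  flatten [seq [seq bigf b (take i l ++ g :: drop i.+1 l) | g <- rec (nth FTop l i)] | i <- iota 0 (size l)].

Fixpoint succ (k : nat) (f : formula) : seq formula :=
  match k with 0 => [::] | k'.+1 =>
  match f with
  | FAnd _ _ => sw_local f ++ deep (succ k') true f
  | FOr _ _ => md_local f ++ deep (succ k') false f
  | _ => [::] end end.

Arguments deep : simpl never.
Arguments sw_local : simpl never.
Arguments md_local : simpl never.

Lemma perm_swap2 (T : eqType) (x y : T) s : perm_eq (x :: y :: s) (y :: x :: s).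
Proof. by apply/permP => P /=; rewrite addnCA. Qed.

Lemma picks_perm l p : p \in picks l -> perm_eq l (p.1 :: p.2).
Proof.
elim: l p => // x l IH p; rewrite inE => /orP [/eqP -> //|/mapP [q Hq ->] /=].
have H := IH _ Hq.
by rewrite -(perm_cons x) in H; apply: perm_trans H _; apply: perm_swap2.
Qed.

Lemma fsplits_perm l p : p \in fsplits l -> perm_eq l (p.1 ++ p.2).
Proof.
elim: l p => [|x l IH] p /=; first by rewrite inE => /eqP ->.
rewrite mem_cat => /orP [] /mapP [q Hq ->] /=; have H := IH _ Hq.
- by rewrite perm_cons.
- rewrite -(perm_cons x) in H; apply: perm_trans H _.
  by rewrite perm_sym -[x :: q.2]cat1s perm_catCA.
Qed.

Lemma uniq_flatten_mem (T : eqType) (ss : seq (seq T)) s :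
  uniq (flatten ss) -> s \in ss -> uniq s.
Proof.
elim: ss => // t ss IH /=; rewrite cat_uniq => /and3P [Ht _ Hss].
by rewrite inE => /orP [/eqP ->|/IH]; auto.
Qed.

Lemma linear_bigf_mem b l x : linear (bigf b l) -> x \in l -> linear x.
Proof.
move=> H Hx; have Hne : l != [::] by case: l Hx {H}.
move: H; rewrite /linear vars_bigf // => H.
by apply: uniq_flatten_mem H _; apply: map_f.
Qed.

Lemma linear_ac a b : ac a b -> linear a = linear b.
Proof. by move=> H; rewrite /linear (perm_uniq (ac_vars H)). Qed.

Lemma local_step b f R w l r s : linear f -> ac f (bigf b (w :: R)) -> SM l r ->
  w = subst s l -> rsq SM f (bigf b (rcons R (subst s r))).
Proof.
move=> Hf Hac HS Hw.
have Hac2 : ac f (bigf b (rcons R w)).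
  by apply: ac_trans Hac _; apply: bigf_perm; rewrite perm_sym perm_rcons.
have Hlw : linear w.
  apply: (@linear_bigf_mem b (rcons R w)); first by rewrite -(linear_ac Hac2).
  by rewrite mem_rcons inE eqxx.
exists (bigf b (rcons R w)), (bigf b (rcons R (subst s r))); split => //; split; last exact: ac_refl.
rewrite -!cats1; apply: bigf_ctx_step.
- by move=> x y z H; case: (b) => /=; [exact: rs_andL|exact: rs_orL].
- by move=> x y z H; case: (b) => /=; [exact: rs_andR|exact: rs_orR].
- rewrite Hw; apply: rs_base => //; first by rewrite -Hw.
  by rewrite /linear -(perm_uniq (vars_subst_perm s (SM_vars HS))) -Hw.
Qed.

Lemma nonnilP (T : eqType) (l : seq T) : nonnil l -> l != [::].
Proof. by case: l. Qed.

Lemma ac_head b x x' R : ac x x' -> ac (bigf b (x :: R)) (bigf b (x' :: R)).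
Proof.
move=> H; apply: (@bigf_ctx_step ac b [::]) => // *; [exact: ac_mkopL|exact: ac_mkopR].
Qed.

Lemma group1 b d X R : X != [::] ->
  ac (bigf b (d :: X ++ R)) (bigf b (mkop b (bigf b X) d :: R)).
Proof.
move=> HX.
have Hp : perm_eq (d :: X ++ R) ((X ++ [:: d]) ++ R).
  by rewrite -catA perm_sym perm_catCA.
apply: ac_trans (bigf_perm b Hp) _.
have H1 : ac (bigf b (X ++ [:: d])) (mkop b (bigf b X) d) by exact: bigf_cat.
case: R {Hp} => [|y R]; first by rewrite cats0.
apply: ac_trans (bigf_cat _ _ _) _ => //; first by case: X HX {H1}.
rewrite (bigf_cons _ _ (isT : y :: R != [::])); exact: ac_mkopL.
Qed.

Lemma group2 b A B R : ac (bigf b (A :: B :: R)) (bigf b (mkop b A B :: R)).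
Proof.
case: R => [|y R]; first exact: ac_refl.
rewrite (bigf_cons _ A (isT : B :: y :: R != [::])) (bigf_cons _ B (isT : y :: R != [::])).
rewrite (bigf_cons _ (mkop b A B) (isT : y :: R != [::])); exact: ac_mkopA.
Qed.

Lemma split_ac b f Y Z : perm_eq (spine b f) (Y ++ Z) -> Y != [::] -> Z != [::] ->
  ac f (mkop b (bigf b Y) (bigf b Z)).
Proof.
move=> Hp HY HZ; rewrite -{1}(spine_bigf b f).
apply: ac_trans (bigf_perm b Hp) _; exact: bigf_cat.
Qed.

Lemma sw_sound f g : linear f -> g \in sw_local f -> rsq SM f g.
Proof.
move=> Hf; rewrite /sw_local => /flatten_mapP [p Hp].
case ED: p.1 => [||?|?|? ?|y z] //.
rewrite -ED => /flatten_mapP [q Hq].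
case HX: (nonnil q.1) => //.
case/mapP => yz; rewrite mem_filter => /andP [/andP [HY HZ] Hyz] ->.
pose s := fun i => nth FTop [:: bigf true q.1; bigf false yz.1; bigf false yz.2] i.
apply: (@local_step true f q.2 (FAnd (bigf true q.1) (FOr (bigf false yz.1) (bigf false yz.2)))
          switch_l switch_r s) => //; last by left.
rewrite -{1}(spine_bigf true f).
have H1 := picks_perm Hp; have H2 := fsplits_perm Hq.
have H3 : perm_eq (spine true f) (p.1 :: q.1 ++ q.2) by apply: perm_trans H1 _; rewrite perm_cons.
apply: ac_trans (bigf_perm true H3) _.
apply: ac_trans (group1 _ _ _ (nonnilP HX)) _.
apply: ac_head; apply: ac_mkopR.
exact: split_ac (fsplits_perm Hyz) (nonnilP HY) (nonnilP HZ).
Qed.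

Lemma md_sound f g : linear f -> g \in md_local f -> rsq SM f g.
Proof.
move=> Hf; rewrite /md_local => /flatten_mapP [p Hp].
case EA: p.1 => [||?|?|? ?|? ?] //.
rewrite -EA => /flatten_mapP [q Hq].
case EB: q.1 => [||?|?|? ?|? ?] //.
rewrite -EB => /flatten_mapP [wx]; rewrite mem_filter => /andP [/andP [HW HX] Hwx].
case/mapP => yz; rewrite mem_filter => /andP [/andP [HY HZ] Hyz] ->.
pose s := fun i => nth FTop [:: bigf true wx.2; bigf true yz.1; bigf true yz.2; bigf true wx.1] i.
apply: (@local_step false f q.2 (FOr (FAnd (bigf true wx.1) (bigf true wx.2)) (FAnd (bigf true yz.1) (bigf true yz.2)))
          medial_l medial_r s) => //; last by right.
rewrite -{1}(spine_bigf false f).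
have H1 := picks_perm Hp; have H2 := picks_perm Hq.
have H3 : perm_eq (spine false f) (p.1 :: q.1 :: q.2) by apply: perm_trans H1 _; rewrite perm_cons.
apply: ac_trans (bigf_perm false H3) _.
apply: ac_trans (group2 _ _ _ _) _.
apply: ac_head; apply: ac_mkopLR.
- exact: split_ac (fsplits_perm Hwx) (nonnilP HW) (nonnilP HX).
- exact: split_ac (fsplits_perm Hyz) (nonnilP HY) (nonnilP HZ).
Qed.

Lemma succ_sound k f g : linear f -> g \in succ k f -> rsq SM f g.
Proof.
elim: k f g => // k IH f g Hf.
have Hdeep : forall b, bigf b (spine b f) = f -> g \in deep (succ k) b f -> rsq SM f g.
  move=> b Eb; rewrite /deep /= => /flatten_mapP [i]; rewrite mem_iota add0n => /andP [_ Hi] /mapP [g0 Hg0 ->].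
  have E : spine b f = take i (spine b f) ++ nth FTop (spine b f) i :: drop i.+1 (spine b f).
    by rewrite -drop_nth // cat_take_drop.
  rewrite -{1}Eb {1}E; apply: rsq_ctx; apply: IH Hg0.
  apply: (@linear_bigf_mem b (spine b f)); first by rewrite Eb.
  exact: mem_nth.
have Hs := spine_bigf.
case: f Hf Hdeep => // x y Hf Hdeep; rewrite [succ _ _]/= mem_cat => /orP [].
- by apply: sw_sound.
- by apply: Hdeep; rewrite Hs.
- by apply: md_sound.
- by apply: Hdeep; rewrite Hs.
Qed.


Definition minvar (f : formula) := foldr minn 1000 (vars f).

Fixpoint fsize (f : formula) : nat :=
  match f with FAnd a b | FOr a b => (fsize a + fsize b).+1 | _ => 1 end.

Fixpoint canon_k (le : rel formula) (k : nat) (f : formula) : formula :=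
  match k with 0 => f | k'.+1 =>
  match f with
  | FAnd _ _ => bigf true (sort le (map (canon_k le k') (flat true f)))
  | FOr _ _ => bigf false (sort le (map (canon_k le k') (flat false f)))
  | _ => f end end.

Fixpoint code (f : formula) : seq nat :=
  match f with
  | FAnd a b => 1 :: code a ++ code b
  | FOr a b => 2 :: code a ++ code b
  | _ => [:: 0] end.
Fixpoint lexle (s t : seq nat) : bool :=
  match s, t with
  | [::], _ => true
  | _ :: _, [::] => false
  | x :: s', y :: t' => (x < y) || ((x == y) && lexle s' t') end.
Definition shle (a b : formula) := lexle (code a) (code b).
Definition shapesort f := canon_k shle (fsize f) f.
Definition relabel f := ren (fun x => index x (vars f)) f.

Fixpoint bt (k n lo : nat) : seq formula :=
  match k with 0 => [::] | k'.+1 =>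
  if n == 1 then [:: FVar lo] else
  flatten [seq flatten [seq [seq mkop b l r | l <- bt k' i lo, r <- bt k' (n - i) (lo + i)]
     | b <- [:: true; false]] | i <- iota 1 n.-1]
  end.

Fixpoint splits (l : seq nat) : seq (seq nat * seq nat) :=
  match l with
  | [::] => [:: ([::], [::])]
  | x :: l' => [seq (x :: p.1, p.2) | p <- splits l'] ++ [seq (p.1, x :: p.2) | p <- splits l']
  end.

Fixpoint cgen (k : nat) (S : seq nat) : seq formula :=
  match k with 0 => [::] | k'.+1 =>
  match S with
  | [::] => [::]
  | [:: x] => [:: FVar x]
  | x :: S' => flatten [seq
       (if p.2 is [::] then [::] else
        flatten [seq [seq mkop b l r | l <- [seq l <- cgen k' (x :: p.1) | ~~ topis b l], r <- cgen k' p.2]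
          | b <- [:: true; false]])
      | p <- splits S']
  end end.

Fixpoint allx {T} (p : T -> bool) (s : seq T) : bool :=
  match s with [::] => true | x :: s' => if p x then allx p s' else false end.
Fixpoint hasx {T} (p : T -> bool) (s : seq T) : bool :=
  match s with [::] => false | x :: s' => if p x then true else hasx p s' end.

Definition fbody (P : formula -> bool) (G1 G2 : seq formula) : bool :=
  allx (fun b => allx (fun l => if topis b l then true else allx (fun r => P (mkop b l r)) G2) G1)
    [:: true; false].

Definition forall_cgen (P : formula -> bool) (k : nat) (S : seq nat) : bool :=
  match k with 0 => true | k'.+1 =>
  match S with
  | [::] => true
  | [:: x] => P (FVar x)
  | x :: S' => allx (fun p => if p.2 is [::] then true else fbody P (cgen k' (x :: p.1)) (cgen k' p.2))
      (splits S')
  end end.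

Fixpoint lookup (K : seq nat) (T : seq (seq nat * seq formula)) : seq formula :=
  match T with [::] => [::] | p :: T' => if K == p.1 then p.2 else lookup K T' end.

Definition keys_of (S : seq nat) : seq (seq nat) :=
  match S with [::] => [::] | x :: S' => flatten [seq [:: x :: p.1; p.2] | p <- splits S'] end.

Definition table (k : nat) (S : seq nat) : seq (seq nat * seq formula) :=
  match k with 0 => [::] | k'.+1 => [seq (K, cgen k' K) | K <- keys_of S] end.

Definition forall_cgenT (P : formula -> bool) (T : seq (seq nat * seq formula)) (k : nat) (S : seq nat) : bool :=
  match k with 0 => true | k'.+1 =>
  match S with
  | [::] => true
  | [:: x] => P (FVar x)
  | x :: S' => allx (fun p => if p.2 is [::] then true else fbody P (lookup (x :: p.1) T) (lookup p.2 T))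
      (splits S')
  end end.

Fixpoint fle (a b : formula) : bool :=
  match a, b with
  | FVar x, FVar y => x <= y
  | FVar _, _ => true
  | _, FVar _ => false
  | FAnd a1 a2, FAnd b1 b2 | FOr a1 a2, FOr b1 b2 =>
      if feqb a1 b1 then fle a2 b2 else fle a1 b1
  | FAnd _ _, _ => true
  | _, FAnd _ _ => false
  | _, _ => true end.

Fixpoint dedup (l : seq formula) : seq formula :=
  match l with
  | x :: ((y :: _) as l') => if feqb x y then dedup l' else x :: dedup l'
  | _ => l end.

Definition Dphi n := dedup (sort fle (map (fun f => relabel (shapesort f)) (bt n n 0))).

Lemma canon_ac le k f : ac f (canon_k le k f).
Proof.
elim: k f => [|k IH] f /=; first exact: ac_refl.
have H : forall b, ac f (bigf b (sort le [seq canon_k le k i | i <- flat b f])).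
  move=> b; apply: ac_trans (flat_ac b f) _.
  apply: ac_trans (bigf_perm b _); last by rewrite perm_sym perm_sort; exact: perm_refl.
  rewrite -{1}(map_id (flat b f)); apply: bigf_map_ac => x _; exact: IH.
by case: f H => *; try exact: ac_refl; auto.
Qed.

Lemma dedup_cons2 y z l : dedup (y :: z :: l) = if feqb y z then dedup (z :: l) else y :: dedup (z :: l).
Proof. by []. Qed.

Lemma mem_dedup x l : x \in l -> x \in dedup l.
Proof.
elim: l => // y [|z l] IH; first by [].
move=> Hx; rewrite dedup_cons2.
case: (feqbP y z) => [Eyz|_].
- apply: IH; move: Hx; rewrite inE => /orP [/eqP ->|//]; by rewrite Eyz inE eqxx.
- move: Hx; rewrite inE => /orP [/eqP ->|Hx]; first by rewrite inE eqxx.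
  by rewrite inE IH ?orbT.
Qed.

Lemma bt_succ k n lo : bt k.+1 n lo = if n == 1 then [:: FVar lo] else
  flatten [seq flatten [seq [seq mkop b l r | l <- bt k i lo, r <- bt k (n - i) (lo + i)]
     | b <- [:: true; false]] | i <- iota 1 n.-1].
Proof. by []. Qed.

Lemma cf_vars f : constant_free f -> vars f != [::].
Proof. by elim: f => //= a Ha b Hb /andP [/Ha]; case: (vars a). Qed.

Lemma bt_complete f k n lo : constant_free f -> negation_free f ->
  vars f = iota lo n -> n <= k -> f \in bt k n lo.
Proof.
elim: f k n lo => //=.
- move=> x [|k] n lo _ _ Hv Hn.
    by move: Hn; rewrite leqn0 => /eqP Hn0; move: Hv; rewrite Hn0.
  have : size [:: x] = size (iota lo n) by rewrite Hv.
  rewrite size_iota /= => Hn1; subst n; move: Hv => /= [->].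
  by rewrite inE.
- move=> a IHa c IHc [|k] n lo /andP [Ca Cc] /andP [Na Nc] Hv Hn.
    by move: Hn Hv; rewrite leqn0 => /eqP ->; case: (vars a) (cf_vars Ca).
  set i := size (vars a).
  set j := size (vars c).
  have Hnij : n = i + j by rewrite -(size_iota lo n) -Hv size_cat.
  have Hi : 0 < i by rewrite lt0n size_eq0 cf_vars.
  have Hj : 0 < j by rewrite lt0n size_eq0 cf_vars.
  subst n; move: Hv; rewrite iotaD => /eqP; rewrite eqseq_cat ?size_iota // => /andP [/eqP Ha0 /eqP Hc0].
  rewrite bt_succ ifN_eq; last by apply/eqP => H; move: (leq_add Hi Hj); rewrite H.
  apply/flatten_mapP; exists i; first by rewrite mem_iota Hi /= add1n prednK ?addn_gt0 ?Hi // -{1}[i]addn0 ltn_add2l.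
  apply/flatten_mapP; exists true; first by rewrite !inE.
  have -> : i + j - i = j by rewrite addKn.
  apply: (@allpairs_f _ _ _ (mkop true)); [apply: IHa|apply: IHc] => //.
  + by rewrite -ltnS; apply: leq_trans Hn; rewrite -addn1 leq_add2l.
  + by rewrite -ltnS; apply: leq_trans Hn; rewrite -add1n leq_add2r.
- move=> a IHa c IHc [|k] n lo /andP [Ca Cc] /andP [Na Nc] Hv Hn.
    by move: Hn Hv; rewrite leqn0 => /eqP ->; case: (vars a) (cf_vars Ca).
  set i := size (vars a).
  set j := size (vars c).
  have Hnij : n = i + j by rewrite -(size_iota lo n) -Hv size_cat.
  have Hi : 0 < i by rewrite lt0n size_eq0 cf_vars.
  have Hj : 0 < j by rewrite lt0n size_eq0 cf_vars.
  subst n; move: Hv; rewrite iotaD => /eqP; rewrite eqseq_cat ?size_iota // => /andP [/eqP Ha0 /eqP Hc0].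
  rewrite bt_succ ifN_eq; last by apply/eqP => H; move: (leq_add Hi Hj); rewrite H.
  apply/flatten_mapP; exists i; first by rewrite mem_iota Hi /= add1n prednK ?addn_gt0 ?Hi // -{1}[i]addn0 ltn_add2l.
  apply/flatten_mapP; exists false; first by rewrite !inE.
  have -> : i + j - i = j by rewrite addKn.
  apply: (@allpairs_f _ _ _ (mkop false)); [apply: IHa|apply: IHc] => //.
  + by rewrite -ltnS; apply: leq_trans Hn; rewrite -addn1 leq_add2l.
  + by rewrite -ltnS; apply: leq_trans Hn; rewrite -add1n leq_add2r.
Qed.


Lemma cgen_cons k x y S : cgen k.+1 [:: x, y & S] =
  flatten [seq
       (if p.2 is [::] then [::] else
        flatten [seq [seq mkop b l r | l <- [seq l <- cgen k (x :: p.1) | ~~ topis b l], r <- cgen k p.2]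
          | b <- [:: true; false]])
      | p <- splits (y :: S)].
Proof. by []. Qed.

Lemma allxE T (p : T -> bool) s : allx p s = all p s.
Proof. by elim: s => //= x s ->; case: (p x). Qed.
Lemma hasxE T (p : T -> bool) s : hasx p s = has p s.
Proof. by elim: s => //= x s ->; case: (p x). Qed.

Lemma forall_cgen_cons P k x y S : forall_cgen P k.+1 [:: x, y & S] =
  allx (fun p => if p.2 is [::] then true else fbody P (cgen k (x :: p.1)) (cgen k p.2))
      (splits (y :: S)).
Proof. by []. Qed.

Lemma forall_cgenP P k S : forall_cgen P k S -> forall t, t \in cgen k S -> P t.
Proof.
case: k => // k; case: S => // x [|y S].
  by rewrite /= => H t; rewrite inE => /eqP ->.
rewrite forall_cgen_cons cgen_cons allxE => /allP H t /flatten_mapP [p Hp].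
move: (H p Hp); case: p.2 => // z q; rewrite /fbody allxE => /allP Hb /flatten_mapP [b Hb'].
move/allpairsP => [[l r] /= [Hl Hr ->]].
move: Hl; rewrite mem_filter => /andP [Hl1 Hl2].
move: (Hb b Hb'); rewrite allxE => /allP /(_ l Hl2); rewrite (negbTE Hl1) allxE => /allP; exact.
Qed.

Lemma lookup_table (f : seq nat -> seq formula) K keys : K \in keys ->
  lookup K [seq (K', f K') | K' <- keys] = f K.
Proof.
elim: keys => // K0 keys IH; rewrite inE /=.
by case: eqP => [->|_] //= /IH.
Qed.

Lemma forall_cgenT_eq P k S : forall_cgenT P (table k S) k S = forall_cgen P k S.
Proof.
case: k => // k; case: S => // x [|y S] //.
rewrite forall_cgen_cons /forall_cgenT /table !allxE; apply: eq_in_all => p Hp /=.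
have Hk : forall K, K \in [:: x :: p.1; p.2] -> lookup K [seq (K', cgen k K') | K' <- keys_of [:: x, y & S]] = cgen k K.
  move=> K HK; apply: lookup_table; apply/flatten_mapP; by exists p.
by case E: p.2 => [|z q] //; rewrite !Hk // !inE ?E eqxx ?orbT.
Qed.

Lemma splits_filter (a : pred nat) l : (filter a l, filter (predC a) l) \in splits l.
Proof.
elim: l => [|x l IH] /=; first by rewrite inE.
rewrite mem_cat; case: (a x) => /=.
- by rewrite (map_f (fun p => (x :: p.1, p.2)) IH).
- by rewrite (map_f (fun p => (p.1, x :: p.2)) IH) orbT.
Qed.

Lemma cgen_complete k S psi : uniq S -> perm_eq (vars psi) S -> size S <= k ->
  constant_free psi -> negation_free psi -> exists2 g, g \in cgen k S & ac psi g.
Proof.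
elim: k S psi => [|k IH] S psi HS Hp Hk Hc Hn.
  move: Hk; rewrite leqn0 size_eq0 => /eqP HS0; move: Hp; rewrite HS0 => /perm_nilP Hv.
  by move: (cf_vars Hc); rewrite Hv.
case: S HS Hp Hk => [|x [|y S'']] HS Hp Hk.
- by move/perm_nilP: Hp (cf_vars Hc) => ->.
- case: psi Hp Hc Hn => //=.
  + move=> z Hp _ _; have : z \in [:: x] by rewrite -(perm_mem Hp) inE.
    rewrite inE => /eqP ->; exists (FVar x); [by rewrite inE|exact: ac_refl].
  + move=> a c Hp /andP [Ca Cc] _; move: (perm_size Hp); rewrite size_cat.
    by case: (vars a) (cf_vars Ca) => // ? [|? ?] _; case: (vars c) (cf_vars Cc).
  + move=> a c Hp /andP [Ca Cc] _; move: (perm_size Hp); rewrite size_cat.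
    by case: (vars a) (cf_vars Ca) => // ? [|? ?] _; case: (vars c) (cf_vars Cc).
- set S' := y :: S''.
  have [b Hb] : exists b, topis b psi.
    case: psi Hp Hc Hn => //= [z Hp _ _|a c|a c]; try by [exists true|exists false].
    by move: (perm_size Hp).
  set L := flat b psi.
  have HL2 : 1 < size L by exact: size_flat.
  have Hx : x \in vars psi by rewrite (perm_mem Hp) inE eqxx.
  rewrite -(vars_flat b psi) in Hx; case/flatten_mapP: Hx => c1 Hc1 Hxc1.
  set R := rem c1 L.
  have HLR : perm_eq L (c1 :: R) by apply: perm_to_rem.
  have HR : R != [::] by rewrite -size_eq0 size_rem // -subn1 subn_eq0 -ltnNge.
  have Hac : ac psi (mkop b c1 (bigf b R)).
    apply: ac_trans (flat_ac b psi) _; apply: ac_trans (bigf_perm b HLR) _.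
    by rewrite bigf_cons //; exact: ac_refl.
  set A := vars c1. set B := vars (bigf b R).
  have HvAB : perm_eq (x :: S') (A ++ B).
    have H := ac_vars Hac; rewrite vars_mkop in H.
    by apply: perm_trans _ H; rewrite perm_sym.
  have HuAB : uniq (A ++ B) by rewrite -(perm_uniq HvAB).
  move: (HuAB); rewrite cat_uniq => /and3P [HuA HdAB HuB].
  have HxS' : x \notin S' by move: HS => /= /andP [].
  have HuS' : uniq S' by move: HS => /= /andP [].
  have HmS : forall z, (z \in x :: S') = (z \in A) || (z \in B) by move=> z; rewrite (perm_mem HvAB) mem_cat.
  pose p := (filter (mem A) S', filter (predC (mem A)) S').
  have Hp1 : perm_eq A (x :: p.1).
    apply: uniq_perm => //; first by rewrite cons_uniq filter_uniq // mem_filter (negbTE HxS') andbF.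
    move=> z; rewrite inE mem_filter /=; apply/idP/idP.
    * move=> HzA; have : z \in x :: S' by rewrite HmS HzA.
      by rewrite inE => /orP [->|->]; rewrite ?HzA ?orbT.
    * by case/orP => [/eqP ->|/andP [] //]; rewrite Hxc1.
  have HxA : x \in A by [].
  have Hp2 : perm_eq B p.2.
    apply: uniq_perm => //; first by rewrite filter_uniq.
    move=> z; rewrite mem_filter /=; apply/idP/idP.
    * move=> HzB; have HzA : z \notin A.
        by apply/negP => HzA; move/hasP: HdAB; apply; exists z.
      have : z \in x :: S' by rewrite HmS HzB orbT.
      rewrite inE HzA => /orP [/eqP Ez|->] //.
      by rewrite Ez HxA in HzA.
    * case/andP => HzA HzS'; have : z \in x :: S' by rewrite inE HzS' orbT.
      by rewrite HmS (negbTE HzA).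
  have HsA : 0 < size A by rewrite lt0n size_eq0; apply/eqP => E; move: Hxc1; rewrite -/A E.
  have HsB : 0 < size B.
    have [r Hr] : exists r, r \in R by case: (R) HR => // r ? _; exists r; rewrite inE eqxx.
    have Cr : constant_free r.
      by move: Hc; rewrite -(cf_flat b) => /allP; apply; apply: mem_rem Hr.
    case E: (vars r) (cf_vars Cr) => [|z ?] // _.
    have HzB : z \in B by rewrite /B vars_bigf //; apply/flatten_mapP; exists r => //; rewrite E inE eqxx.
    by rewrite lt0n size_eq0; apply/eqP => EB; rewrite EB in HzB.
  have HsS : size (x :: S') = size A + size B by rewrite (perm_size HvAB) size_cat.
  have Cc1 : constant_free c1 by move: Hc; rewrite -(cf_flat b) => /allP; apply.
  have Nc1 : negation_free c1 by move: Hn; rewrite -(nf_flat b) => /allP; apply.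
  have CR : constant_free (bigf b R).
    rewrite cf_bigf //; apply/allP => z Hz; move: Hc; rewrite -(cf_flat b) => /allP; apply.
    exact: mem_rem Hz.
  have NR : negation_free (bigf b R).
    rewrite nf_bigf //; apply/allP => z Hz; move: Hn; rewrite -(nf_flat b) => /allP; apply.
    exact: mem_rem Hz.
  have [g1 Hg1 Hac1] : exists2 g1, g1 \in cgen k (x :: p.1) & ac c1 g1.
    apply: IH => //.
    + by rewrite cons_uniq filter_uniq // mem_filter (negbTE HxS') andbF.
    + by rewrite -(perm_size Hp1); rewrite -ltnS; apply: leq_trans Hk; rewrite HsS -addn1 leq_add2l.
  have [g2 Hg2 Hac2] : exists2 g2, g2 \in cgen k p.2 & ac (bigf b R) g2.
    apply: IH => //.
    + by rewrite filter_uniq.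
    + by rewrite -(perm_size Hp2); rewrite -ltnS; apply: leq_trans Hk; rewrite HsS -add1n leq_add2r.
  exists (mkop b g1 g2); last exact: ac_trans Hac (ac_mkopLR _ Hac1 Hac2).
  rewrite cgen_cons; apply/flatten_mapP; exists p; first exact: splits_filter.
  have Hne : p.2 != [::] by rewrite -size_eq0 -(perm_size Hp2) -lt0n.
  move: Hg2 Hne; case: (p.2) => // z q Hg2 _.
  apply/flatten_mapP; exists b; first by case: (b).
  apply: (@allpairs_f _ _ _ (mkop b)) => //.
  rewrite mem_filter Hg1 andbT -(ac_top b Hac1) (topis_flat Hc1) //.
Qed.


Fixpoint mt (f : formula) : seq (seq nat) :=
  match f with
  | FTop => [:: [::]] | FBot => [::] | FVar x => [:: [:: x]] | FNeg _ => [::]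
  | FAnd a b => let mb := mt b in flatten [seq [seq p ++ q | q <- mb] | p <- mt a]
  | FOr a b => mt a ++ mt b end.
Definition asg (n : nat) (m : seq nat) : seq bool := mkseq (fun i => i \in m) n.
Definition evl (a : seq bool) (f : formula) := eval (fun i => nth false a i) f.
Definition okg (n : nat) (u g : formula) : bool :=
  perm_eq (vars g) (iota 0 n) && constant_free g && negation_free g &&
  hasx (fun a => ~~ evl a u) (map (asg n) (mt g)).

Definition check_gen (F : (formula -> bool) -> bool) (n : nat) (u : formula) : bool :=
  let Mu := map (asg n) (mt u) in
  let Mx := [seq map (asg n) (mt (subst1 x FTop u)) | x <- iota 0 n] in
  let S := [seq (g, map (asg n) (mt g)) | g <- succ (fsize u) u & okg n u g] in
  F (fun t =>
     if allx (fun a => evl a t) Mu then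
     if allx (fun x => hasx (fun a => ~~ evl a (subst1 x FBot t)) (nth [::] Mx x)) (iota 0 n) then
     if feqb t u then true else
     hasx (fun p => allx (fun a => evl a t) p.2) S else true else true).

Definition check_u (n : nat) (u : formula) : bool :=
  check_gen (fun P => forall_cgen P n (iota 0 n)) n u.

Definition check_n n := let T := table n (iota 0 n) in
  allx (check_gen (fun P => forall_cgenT P T n (iota 0 n)) n) (Dphi n).

Lemma check_n_u n u : check_n n -> u \in Dphi n -> check_u n u.
Proof.
rewrite /check_n allxE => /allP H Hu; move: (H u Hu).
by rewrite /check_u /check_gen forall_cgenT_eq.
Qed.

Lemma mt_eval v f : negation_free f -> eval v f = has (fun m => all v m) (mt f).
Proof.
elim: f => //= [x _|a IHa b IHb /andP [Na Nb]|a IHa b IHb /andP [Na Nb]].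
- by rewrite andbT orbF.
- rewrite IHa // IHb //; apply/andP/hasP.
  + case=> /hasP [p Hp Hvp] /hasP [q Hq Hvq]; exists (p ++ q); last by rewrite all_cat Hvp.
    by apply/flatten_mapP; exists p => //; apply: map_f.
  + case=> m /flatten_mapP [p Hp /mapP [q Hq ->]]; rewrite all_cat => /andP [H1 H2].
    by split; apply/hasP; [exists p|exists q].
- by rewrite has_cat IHa // IHb.
Qed.

Lemma mono (v w : nat -> bool) f : negation_free f -> (forall i, v i -> w i) -> eval v f -> eval w f.
Proof.
move=> Nf H; elim: f Nf => //= [x _|a IHa b IHb /andP [Na Nb]|a IHa b IHb /andP [Na Nb]].
- exact: H.
- by case/andP => /(IHa Na) -> /(IHb Nb) ->.
- by case/orP => [/(IHa Na) ->|/(IHb Nb) ->]; rewrite ?orbT.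
Qed.

Lemma valid_mt a b : negation_free a -> negation_free b ->
  valid a b <-> (forall m, m \in mt a -> eval (fun i => i \in m) b).
Proof.
move=> Na Nb; split.
- move=> H m Hm; apply: H; rewrite mt_eval //; apply/hasP; exists m => //; exact/allP.
- move=> H v; rewrite mt_eval // => /hasP [m Hm /allP Hv].
  apply: mono (H m Hm) => // i; exact: Hv.
Qed.

Lemma asg_evl n m f : (forall x, x \in vars f -> x < n) ->
  evl (asg n m) f = eval (fun i => i \in m) f.
Proof. by move=> H; apply: eval_ext => x /H Hx; rewrite nth_mkseq. Qed.

Lemma vars_subst1 x c f : (c = FTop \/ c = FBot) -> {subset vars (subst1 x c f) <= vars f}.
Proof.
move=> Hc z; rewrite /subst1 vars_subst => /flatten_mapP [y Hy].
by case: eqP => _; [case: Hc => ->|rewrite inE => /eqP ->].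
Qed.

Lemma nf_subst1 x c f : (c = FTop \/ c = FBot) -> negation_free f -> negation_free (subst1 x c f).
Proof.
move=> Hc; rewrite /subst1; elim: f => //= [y|a IHa b IHb|a IHa b IHb].
- by case: eqP => _ //; case: Hc => ->.
- by case/andP => /IHa -> /IHb ->.
- by case/andP => /IHa -> /IHb ->.
Qed.

Lemma check_u_spec n u t : check_u n u ->
  negation_free u -> linear u -> {subset vars u <= iota 0 n} ->
  negation_free t -> perm_eq (vars t) (iota 0 n) ->
  t \in cgen n (iota 0 n) -> valid u t -> nontrivial u t ->
  t = u \/ exists g, [/\ rsq SM u g, valid g t, exists w : nat -> bool, eval w g && ~~ eval w u &
     [/\ perm_eq (vars g) (iota 0 n), constant_free g & negation_free g]].
Proof.
move=> Hch Nu Lu Vu Nt Vt Ht Hv Hnt.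
have Vt' : forall x, x \in vars t -> x < n.
  by move=> x; rewrite (perm_mem Vt) mem_iota.
have Vu' : forall x, x \in vars u -> x < n.
  by move=> x /Vu; rewrite mem_iota.
have := forall_cgenP Hch Ht; rewrite /=.
have -> : allx (fun a => evl a t) [seq asg n i | i <- mt u].
  rewrite allxE; apply/allP => a /mapP [m Hm ->]; rewrite asg_evl //.
  by move/(valid_mt Nu Nt): Hv; apply.
have -> : allx (fun x => hasx (fun a => ~~ evl a (subst1 x FBot t))
     (nth [::] [seq [seq asg n i | i <- mt (subst1 x0 FTop u)] | x0 <- iota 0 n] x)) (iota 0 n).
  rewrite allxE; apply/allP => x; rewrite mem_iota add0n => /andP [_ Hx].
  rewrite (nth_map 0) ?size_iota // nth_iota // add0n hasxE.
  apply/negPn/negP => Hno; apply: (Hnt x).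
    by rewrite /inf_vars mem_cat (perm_mem Vt) mem_iota Hx orbT.
  have Nu' := nf_subst1 x (or_introl erefl) Nu.
  have Nt' := nf_subst1 x (or_intror erefl) Nt.
  apply/(valid_mt Nu' Nt') => m Hm.
  rewrite -(@asg_evl n); last by move=> z /(vars_subst1 (or_intror erefl)) /Vt'.
  apply/negPn/negP => Hf; move/negP: Hno; apply; apply/hasP; exists (asg n m) => //.
  exact: map_f.
case: feqbP => [-> _|_] /=; first by left.
rewrite hasxE => /hasP [[g M] /mapP [g' Hg' E]]; case: E => -> -> /=.
move: Hg'; rewrite mem_filter => /andP [/andP [/andP [/andP [Vg Cg] Ng] Hs] Hg'] Hall.
right; exists g'; split => //.
- exact: succ_sound Lu Hg'.
- apply/(valid_mt Ng Nt) => m Hm; rewrite -(@asg_evl n) //.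
  by move: Hall; rewrite allxE => /allP; apply; apply: map_f.
- move: Hs; rewrite hasxE => /hasP [a /mapP [m Hm ->]].
  rewrite asg_evl // => Hnu; exists (fun i => i \in m); rewrite Hnu andbT mt_eval //.
  by apply/hasP; exists m => //; apply/allP.
Qed.


Fixpoint allbits (n : nat) : seq (seq bool) :=
  match n with 0 => [:: [::]] | n'.+1 => [seq b :: a | b <- [:: false; true], a <- allbits n'] end.

Definition mu (V : seq nat) (f : formula) : nat :=
  count (fun a => eval (fun x => nth false a (index x V)) f) (allbits (size V)).

Lemma allbitsS n : allbits n.+1 = [seq b :: a | b <- [:: false; true], a <- allbits n].
Proof. by []. Qed.

Lemma mem_allbits a : a \in allbits (size a).
Proof.
elim: a => [|b a IH]; first by rewrite inE.
rewrite [size _]/= allbitsS.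
by apply: (@allpairs_f _ _ _ (fun b a => b :: a)) => //; case: b.
Qed.

Lemma count_lt (T : eqType) (p q : pred T) s :
  (forall x, p x -> q x) -> forall x, x \in s -> q x -> ~~ p x -> count p s < count q s.
Proof.
move=> Hpq x; elim: s => // y s IH; rewrite inE => /orP [/eqP <-|Hx] Hq Hp /=.
- rewrite (negbTE Hp) Hq add0n add1n ltnS; exact: sub_count.
- rewrite -addnS; apply: leq_add; last exact: IH.
  by case: (p y) (Hpq y) => // ->.
Qed.

Lemma mu_lt V f g : {subset vars f <= V} -> {subset vars g <= V} ->
  valid f g -> forall v, eval v g -> ~~ eval v f -> mu V f < mu V g.
Proof.
move=> Hf Hg Hv v Hvg Hvf.
apply: (@count_lt _ _ _ _ _ (map v V)).
- by move=> a; apply: Hv.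
- by rewrite -(size_map v V) mem_allbits.
- rewrite -(eval_ext (v := v)) // => x /Hg Hx.
  by rewrite (nth_map 0) ?index_mem // nth_index.
- rewrite -(eval_ext (v := v)) // => x /Hf Hx.
  by rewrite (nth_map 0) ?index_mem // nth_index.
Qed.

Lemma mu_le V f : mu V f <= size (allbits (size V)).
Proof. exact: count_size. Qed.

Lemma cf_ren r f : constant_free (ren r f) = constant_free f.
Proof. by elim: f => //= a -> b ->. Qed.
Lemma nf_ren r f : negation_free (ren r f) = negation_free f.
Proof. by elim: f => //= a -> b ->. Qed.

Lemma idx_inj (s : seq nat) : {in s &, injective (index^~ s)}.
Proof. by move=> x y Hx Hy E; rewrite -(nth_index 0 Hx) -(nth_index 0 Hy) E. Qed.

Lemma map_index_iota (s : seq nat) : uniq s -> map (index^~ s) s = iota 0 (size s).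
Proof.
move=> Hs; apply: (@eq_from_nth _ 0); first by rewrite size_map size_iota.
move=> i; rewrite size_map => Hi.
by rewrite (nth_map 0) // nth_iota // index_uniq.
Qed.

Lemma nth_inj (s : seq nat) n : uniq s -> size s = n -> {in iota 0 n &, injective (nth 0 s)}.
Proof.
move=> Hs Hn i j; rewrite !mem_iota !add0n => /andP [_ Hi] /andP [_ Hj] E.
by apply/eqP; rewrite -(nth_uniq 0 _ _ Hs) ?Hn // E.
Qed.

Lemma valid_subst s a b : valid a b -> valid (subst s a) (subst s b).
Proof. by move=> H v; rewrite !eval_subst; apply: H. Qed.

Lemma valid_ren_back (r : nat -> nat) (L : seq nat) a b :
  {in L &, injective r} -> {subset vars a <= L} -> {subset vars b <= L} ->
  valid (ren r a) (ren r b) -> valid a b.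
Proof.
move=> Hinj Ha Hb H v.
pose w y := has (fun z => (r z == y) && v z) L.
have Hw : forall z, z \in L -> w (r z) = v z.
  move=> z Hz; apply/hasP/idP => [[z' Hz' /andP [/eqP E Hv']]|Hv'].
  + by rewrite -(Hinj _ _ Hz' Hz E).
  + by exists z => //; rewrite eqxx.
have E : forall f, {subset vars f <= L} -> eval v f = eval w (ren r f).
  move=> f Hf; rewrite eval_ren; apply: eval_ext => z /Hf Hz /=; by rewrite Hw.
by rewrite (E a Ha) (E b Hb); apply: H.
Qed.

Lemma subst1_ren r x c f : (c = FTop \/ c = FBot) ->
  {in vars f, forall z, (r z == r x) = (z == x)} ->
  subst1 (r x) c (ren r f) = ren r (subst1 x c f).
Proof.
move=> Hc; rewrite /subst1; elim: f => //= [z|z|a IHa b IHb|a IHa b IHb] H.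
- by rewrite H ?inE //; case: eqP => _ //; case: Hc => ->.
- by rewrite H ?inE // ren_fneg; case: eqP => _ //; case: Hc => ->.
- by rewrite IHa ?IHb // => z Hz; apply: H; rewrite mem_cat Hz ?orbT.
- by rewrite IHa ?IHb // => z Hz; apply: H; rewrite mem_cat Hz ?orbT.
Qed.

Lemma nt_ren r a b : nontrivial a b -> {in inf_vars a b &, injective r} ->
  nontrivial (ren r a) (ren r b).
Proof.
move=> Hnt Hinj y; rewrite /inf_vars !vars_ren -map_cat => /mapP [x Hx ->] Htr.
apply: (Hnt x Hx).
have Hsub : forall c f, (c = FTop \/ c = FBot) -> {subset vars f <= inf_vars a b} ->
    {subset vars (subst1 x c f) <= inf_vars a b}.
  by move=> c f Hc Hf z /(vars_subst1 Hc) /Hf.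
have Hia : {subset vars a <= inf_vars a b} by move=> z Hz; rewrite mem_cat Hz.
have Hib : {subset vars b <= inf_vars a b} by move=> z Hz; rewrite mem_cat Hz orbT.
apply: (valid_ren_back Hinj (Hsub _ _ (or_introl erefl) Hia) (Hsub _ _ (or_intror erefl) Hib)).
rewrite -!subst1_ren; [exact: Htr|right|move=> z Hz|left|move=> z Hz] => //.
- by apply/eqP/eqP => [E|->] //; apply: Hinj => //; apply: Hib.
- by apply/eqP/eqP => [E|->] //; apply: Hinj => //; apply: Hia.
Qed.

Lemma nt_ac a b a' b' : nontrivial a b -> ac a a' -> ac b b' -> nontrivial a' b'.
Proof.
move=> Hnt Ha Hb x Hx Htr; apply: (Hnt x).
  by rewrite /inf_vars mem_cat (perm_mem (ac_vars Ha)) (perm_mem (ac_vars Hb)) -mem_cat.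
apply: valid_ac Htr; apply: ac_subst; exact: ac_sym.
Qed.

Lemma nt_inherit a a' b : valid a a' -> perm_eq (vars a) (vars a') ->
  nontrivial a b -> nontrivial a' b.
Proof.
move=> Hv Hp Hnt x Hx Htr; apply: (Hnt x).
  by rewrite /inf_vars mem_cat (perm_mem Hp) -mem_cat.
move: Htr; rewrite /trivial_at /subst1 => Htr.
apply: valid_trans Htr; exact: valid_subst.
Qed.

Lemma rsq_acL a a' b : ac a a' -> rsq SM a' b -> rsq SM a b.
Proof.
move=> H [c1 [c2 [H1 [H2 H3]]]]; exists c1, c2; split => //; exact: ac_trans H H1.
Qed.

From mathcomp Require Import zify.


Lemma checks_ok : all check_n (iota 1 7).
Proof. vm_cast_no_check (erefl true). Qed.

Lemma main k : forall V phi psi,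
  size (allbits (size V)) - mu V phi < k ->
  uniq V -> perm_eq (vars phi) V -> size V < 8 ->
  constant_free phi -> constant_free psi -> negation_free phi -> negation_free psi ->
  perm_eq (vars phi) (vars psi) -> valid phi psi -> nontrivial phi psi ->
  derivable SM phi psi.
Proof.
elim: k => // k IH V phi psi Hk HV HpV HV8 Cphi Cpsi Nphi Npsi Hpp Hval Hnt.
set n := size (vars phi).
have Hn : n = size V by rewrite /n (perm_size HpV).
have Hu : uniq (vars phi) by rewrite (perm_uniq HpV).
have Hn1 : 0 < n by rewrite lt0n size_eq0 cf_vars.
have Hchk : check_n n.
  by move/allP: checks_ok; apply; rewrite mem_iota Hn1 Hn /=.
have Hsub : forall x, x \in vars psi -> x \in vars phi by move=> x; rewrite (perm_mem Hpp).
set rho := fun x => index x (vars phi).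
set rhoi := fun i => nth 0 (vars phi) i.
set phi0 := ren rho phi.
have Vphi0 : vars phi0 = iota 0 n by rewrite /phi0 vars_ren map_index_iota.
have Hbt : phi0 \in bt n n 0 by apply: bt_complete; rewrite ?cf_ren ?nf_ren.
set phi1 := shapesort phi0.
have Hac01 : ac phi0 phi1 := canon_ac _ _ _.
have Vphi1 : perm_eq (vars phi1) (iota 0 n) by rewrite -Vphi0 perm_sym; exact: ac_vars.
have Hu1 : uniq (vars phi1) by rewrite (perm_uniq Vphi1) iota_uniq.
have Hs1 : size (vars phi1) = n by rewrite (perm_size Vphi1) size_iota.
set tau := fun x => index x (vars phi1).
set taui := fun i => nth 0 (vars phi1) i.
set u := ren tau phi1.
have HuD : u \in Dphi n.
  rewrite /Dphi; apply: mem_dedup; rewrite mem_sort; apply/mapP; exists phi0 => //.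
have Hcu : check_u n u by apply: check_n_u.
have Vu : vars u = iota 0 n by rewrite /u vars_ren map_index_iota // Hs1.
set psi0 := ren rho psi.
set psi1 := ren tau psi0.
have Vpsi0 : perm_eq (vars psi0) (iota 0 n).
  by rewrite -Vphi0 /psi0 /phi0 !vars_ren perm_map // perm_sym.
have Vpsi1 : perm_eq (vars psi1) (iota 0 n).
  rewrite /psi1 vars_ren -Hs1 -(map_index_iota Hu1) perm_map //.
  by apply: perm_trans Vpsi0 _; rewrite perm_sym.
have [t Ht Hact] : exists2 t, t \in cgen n (iota 0 n) & ac psi1 t.
  apply: cgen_complete; rewrite ?iota_uniq ?size_iota ?cf_ren ?nf_ren //.
have Hphi_n : forall x, (x \in vars phi1) = (x < n).
  by move=> x; rewrite (perm_mem Vphi1) mem_iota.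
have Hpsi0_n : forall x, (x \in vars psi0) = (x < n).
  by move=> x; rewrite (perm_mem Vpsi0) mem_iota.
have Hphi0_n : forall x, (x \in vars phi0) = (x < n).
  by move=> x; rewrite Vphi0 mem_iota.
have Hrr : forall f, {subset vars f <= vars phi} -> ren rhoi (ren rho f) = f.
  move=> f Hf; rewrite ren_comp -{2}(ren_id f); apply: ren_ext => x /Hf Hx /=.
  by rewrite /rhoi /rho nth_index.
have Htt : forall f, {subset vars f <= vars phi1} -> ren taui (ren tau f) = f.
  move=> f Hf; rewrite ren_comp -{2}(ren_id f); apply: ren_ext => x /Hf Hx /=.
  by rewrite /taui /tau nth_index.
have Hrr' : forall i, i < n -> rho (rhoi i) = i by move=> i Hi; rewrite /rho /rhoi index_uniq.
have Htt' : forall i, i < n -> tau (taui i) = i by move=> i Hi; rewrite /tau /taui index_uniq ?Hs1.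
have Hinj_rhoi : {in iota 0 n &, injective rhoi} by apply: nth_inj.
have Hinj_taui : {in iota 0 n &, injective taui} by apply: nth_inj.
have Hvut : valid u t.
  apply: valid_ac (ac_refl _) Hact _; apply: valid_ren.
  apply: valid_ac Hac01 (ac_refl _) _; exact: valid_ren.
have Hntut : nontrivial u t.
  apply: nt_ac (ac_refl _) Hact; apply: nt_ren.
    apply: nt_ac Hac01 (ac_refl _); apply: nt_ren => // x y Hx Hy E.
    apply: (@idx_inj (vars phi) x y _ _ E); [move: Hx|move: Hy]; by rewrite /inf_vars mem_cat => /orP [//|/Hsub].
  move=> x y Hx Hy E; apply: (@idx_inj (vars phi1) x y _ _ E); [move: Hx|move: Hy];
    by rewrite /inf_vars mem_cat => /orP [//|]; rewrite Hpsi0_n Hphi_n.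
have Nu : negation_free u by rewrite /u nf_ren -(ac_nf Hac01) nf_ren.
have Lu : linear u by rewrite /linear Vu iota_uniq.
have Nt : negation_free t by rewrite -(ac_nf Hact) /psi1 /psi0 !nf_ren.
have Vt : perm_eq (vars t) (iota 0 n) by apply: perm_trans Vpsi1; rewrite perm_sym ac_vars.
case: (check_u_spec Hcu Nu Lu _ Nt Vt Ht Hvut Hntut); first by rewrite Vu.
- move=> Etu; rewrite Etu in Hact.
  have H1 : ac psi0 phi1.
    have := ac_ren taui Hact; rewrite Htt ?Htt //.
    by move=> x; rewrite Hpsi0_n Hphi_n.
  have H2 : ac psi phi.
    have := ac_ren rhoi (ac_trans H1 (ac_sym Hac01)); rewrite Hrr ?Hrr //.
  apply: rt_step; right; exact: ac_sym.
- move=> [g [Hrs Hvgt [w /andP [Hwg Hwu]] [Vg Cg Ng]]].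
  set g1 := ren taui g.
  set phi' := ren rhoi g1.
  have H1 : rsq SM phi1 g1.
    have := rsq_ren Hrs (r := taui); rewrite Htt; last by move=> x.
    by apply; rewrite Vu.
  have H2 : rsq SM phi0 g1 := rsq_acL Hac01 H1.
  have H3 : rsq SM phi phi'.
    have := rsq_ren H2 (r := rhoi); rewrite Hrr; last by move=> x.
    by apply; rewrite Vphi0.
  have Vphi' : perm_eq (vars phi') (vars phi) by rewrite perm_sym; exact: rsq_vars.
  apply: (rt_trans _ _ _ phi'); first by apply: rt_step; left.
  have Hmu : mu V phi < mu V phi'.
    apply: (@mu_lt V phi phi' _ _ _ (fun x => w (tau (rho x)))).
    - by move=> x Hx; rewrite -(perm_mem HpV).
    - by move=> x Hx; rewrite -(perm_mem HpV) -(perm_mem Vphi').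
    - exact: rsq_valid H3.
    - rewrite /phi' /g1 !eval_ren (@eval_ext _ w g) // => i.
      rewrite (perm_mem Vg) mem_iota add0n => /andP [_ Hi] /=.
      rewrite Hrr' ?Htt' //; by rewrite -Hphi_n /taui mem_nth ?Hs1.
    - apply: contra Hwu; rewrite -[fun x => _]/((w \o tau) \o rho) -eval_ren -/phi0.
      by rewrite (ac_eval _ Hac01) -eval_ren.
  apply: (IH V) => //.
  - move: (mu_le V phi') Hk Hmu.
    generalize (mu V phi) (mu V phi') (size (allbits (size V))) => a b c; clear; lia.
  - exact: perm_trans Vphi' HpV.
  - by rewrite /phi' /g1 !cf_ren.
  - by rewrite /phi' /g1 !nf_ren.
  - exact: perm_trans Vphi' Hpp.
  - have H4 : valid g psi1 by apply: valid_ac (ac_refl _) (ac_sym Hact) Hvgt.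
    have := valid_ren (r:=taui) H4; rewrite /psi1 Htt => [H5|x]; last by rewrite Hpsi0_n Hphi_n.
    by have := valid_ren (r:=rhoi) H5; rewrite /psi0 Hrr.
  - exact: nt_inherit (rsq_valid H3) (rsq_vars H3) Hnt.
Qed.

Theorem theorem2p13 (n : nat) (phi psi : formula) :
  n < 8 ->
  linear phi -> linear psi ->
  constant_free phi -> constant_free psi ->
  negation_free phi -> negation_free psi ->
  perm_eq (vars phi) (vars psi) -> size (vars phi) = n ->
  valid phi psi -> nontrivial phi psi ->
  derivable SM phi psi.
Proof.
move=> Hn8 Lphi Lpsi Cphi Cpsi Nphi Npsi Hpp Hsz Hval Hnt.
apply: (@main (size (allbits (size (vars phi)))).+1 (vars phi)) => //.
- by rewrite ltnS leq_subr.
- by rewrite Hsz.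
Qed.
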